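(* Let $0\le t\le r\le n/2$ be integers, and let $A_y$ be the $(r-t+1)\times(r-t+1)$ tridiagonal matrix with zero diagonal, superdiagonal entries $\beta_{t+1},\dots,\beta_r$ and subdiagonal entries $\gamma_t,\dots,\gamma_{r-1}$, where $\beta_i=n-i+1$ and $\gamma_i=\frac{(i-t+1)(n-t-i)}{n-i}$. Then $A_y$ has $r-t+1$ simple eigenvalues, and its set of eigenvalues is $\{2x-(n-2t) : x\in\mathcal{R}(n-2t,\,r-t+1)\}$.
   Context: The Krawtchouk polynomial on $\{0,1\}^m$ of degree $k$ is $K^{(m)}_k(x)=\sum_{\ell=0}^k(-1)^\ell\binom{x}{\ell}\binom{m-x}{k-\ell}$ (a polynomial in $x$); $\mathcal{R}(m,k)$ denotes its set of roots, which are real and distinct. *)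

(* Defs.v *)
From HB Require Import structures.
From mathcomp Require Import all_boot all_order all_algebra.
From mathcomp Require Import reals.
Set Implicit Arguments. Unset Strict Implicit. Unset Printing Implicit Defensive.
Import Order.TTheory GRing.Theory Num.Theory.
Local Open Scope ring_scope.

Definition pbinom (R : realType) (p : {poly R}) (l : nat) : {poly R} :=
  (l`!%:R)^-1 *: \prod_(j < l) (p - (j%:R)%:P).

Definition krawtchouk (R : realType) (m k : nat) : {poly R} :=
  \sum_(l < k.+1) ((-1) ^+ l) *: (pbinom 'X l * pbinom ((m%:R)%:P - 'X) (k - l)).

Definition kbeta (R : realType) (n i : nat) : R := n%:R - i%:R + 1.
Definition kgamma (R : realType) (n t i : nat) : R :=
  ((i%:R - t%:R + 1) * (n%:R - t%:R - i%:R)) / (n%:R - i%:R).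

Definition Ay (R : realType) (n r t : nat) : 'M[R]_((r - t).+1) :=
  \matrix_(i, j)
    (if (j : nat) == i.+1 then kbeta R n (t + i).+1
     else if (i : nat) == j.+1 then kgamma R n t (t + j)
     else 0).

(* Main.v *)
From mathcomp Require Import all_boot all_order all_algebra.
From mathcomp Require Import reals.
Require Import Defs.
From mathcomp Require polyrcf.
From mathcomp Require Import zify ring lra.
Import Order.TTheory GRing.Theory Num.Theory.
Local Open Scope ring_scope.
Set Implicit Arguments. Unset Strict Implicit. Unset Printing Implicit Defensive.

Section Gen.
Variable R : realType.
Variable c : nat -> R.

Fixpoint Pp (k : nat) : {poly R} * {poly R} :=
  match k with
  | 0 => (1, 'X)
  | k'.+1 => ((Pp k').2, 'X * (Pp k').2 - (c k)%:P * (Pp k').1)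
  end.
Definition P k := (Pp k).1.

Lemma P0 : P 0 = 1. Proof. by []. Qed.
Lemma P1 : P 1 = 'X. Proof. by []. Qed.
Lemma PS k : P k.+2 = 'X * P k.+1 - (c k.+1)%:P * P k.
Proof. by []. Qed.

Lemma P_size_monic k : (size (P k) = k.+1 /\ P k \is monic) /\
                       (size (P k.+1) = k.+2 /\ P k.+1 \is monic).
Proof.
elim: k => [|k [[s1 m1] [s2 m2]]].
  by rewrite P0 P1 size_polyX size_poly1 monic1 monicX.
split; first by [].
have hs : size ('X * P k.+1) = k.+3.
  by rewrite mulrC size_mulX ?s2 // -size_poly_eq0 s2.
have hl : (size (- ((c k.+1)%:P * P k))%R < size ('X * P k.+1)%R)%N.
  rewrite size_polyN hs (leq_ltn_trans (size_polyMleq _ _)) //.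
  rewrite s1; case: (size _) (size_polyC_leq1 (c k.+1)) => [|[|]] //= _; lia.
rewrite PS; split; first by rewrite size_polyDl.
rewrite monicE lead_coefDl // mulrC lead_coefMX.
exact: m2.
Qed.

Lemma P_size k : size (P k) = k.+1. Proof. by case: (P_size_monic k) => [[]]. Qed.
Lemma P_monic k : P k \is monic. Proof. by case: (P_size_monic k) => [[]]. Qed.

Lemma P_odd k x : (P k).[-x] = (-1)^+k * (P k).[x] /\
                  (P k.+1).[-x] = (-1)^+k.+1 * (P k.+1).[x].
Proof.
elim: k => [|k [h1 h2]]; first by rewrite P0 P1 !hornerE; split; ring.
split=> //; rewrite PS !hornerE h1 h2 !exprS; ring.
Qed.


Lemma choice_nat (Q : nat -> R -> Prop) k :
  (forall i, (i < k)%N -> exists x, Q i x) ->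
  exists f : nat -> R, forall i, (i < k)%N -> Q i (f i).
Proof.
elim: k => [|k IH] H; first by exists (fun _ => 0).
have [f hf] := IH (fun i hi => H i (ltnW hi)).
have [x hx] := H k (ltnSn k).
exists (fun i => if i == k then x else f i) => i; rewrite ltnS leq_eqVlt.
by case: eqP => [->//|_] /= /hf.
Qed.

Lemma incr_lt (s : nat -> R) k :
  (forall i, (i.+1 < k)%N -> s i < s i.+1) ->
  forall i j, (i < j)%N -> (j < k)%N -> s i < s j.
Proof.
move=> H i; elim=> [//|j IH] hij hj.
rewrite ltnS leq_eqVlt in hij; case/orP: hij => [/eqP->|hij]; first exact: H.
exact: lt_trans (IH hij (ltnW hj)) (H _ hj).
Qed.

Lemma incr_le (s : nat -> R) k :
  (forall i, (i.+1 < k)%N -> s i < s i.+1) ->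
  forall i j, (i <= j)%N -> (j < k)%N -> s i <= s j.
Proof.
move=> H i j; rewrite leq_eqVlt => /orP[/eqP->//|hij] hj.
exact/ltW/(incr_lt H hij hj).
Qed.

Lemma ivt2 (p : {poly R}) a b : a <= b -> p.[a] * p.[b] < 0 ->
  exists x, [/\ a < x, x < b & root p x].
Proof.
move=> hab hm.
have [pa0 pb0] : p.[a] != 0 /\ p.[b] != 0.
  by split; apply/eqP=> h; move: hm; rewrite h ?mul0r ?mulr0 ltxx.
have [x /andP[h1 h2] rx] : exists2 x, a <= x <= b & root p x.
  have [ha|ha] := ltrP p.[a] 0.
    have hb : 0 < p.[b] by nra.
    by apply: poly_ivt => //; rewrite !ltW.
  have ha' : 0 < p.[a] by rewrite lt_def pa0.
  have hb : p.[b] < 0 by nra.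
  have hh : (- p).[a] <= 0 <= (- p).[b].
    by rewrite !hornerN oppr_le0 oppr_ge0 !ltW.
  have [x hx rx] := poly_ivt hab hh.
  by exists x => //; move: rx; rewrite /root hornerN oppr_eq0.
exists x; split=> //; rewrite lt_def ?h1 ?h2 andbT.
  by apply: contraTneq rx => ->; rewrite /root pa0.
by apply: contraTneq rx => <-; rewrite /root pb0.
Qed.

Lemma sign_prod (f : nat -> R) k i :
  (forall j, (j < k)%N -> (j < i)%N -> 0 < f j) ->
  (forall j, (j < k)%N -> (i <= j)%N -> f j < 0) ->
  0 < (-1) ^+ (k - i) * \prod_(0 <= j < k) f j.
Proof.
elim: k => [|k IH] H1 H2; first by rewrite big_nil sub0n mulr1 ltr01.
rewrite big_nat_recr //=.
have IH' := IH (fun j hj => H1 j (ltnW hj)) (fun j hj => H2 j (ltnW hj)).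
have [hik|hik] := leqP i k.
  rewrite subSn // exprS.
  have -> : -1 * (-1) ^+ (k - i) * (\prod_(0 <= j < k) f j * f k) =
    ((-1) ^+ (k - i) * \prod_(0 <= j < k) f j) * (- f k) by ring.
  by rewrite mulr_gt0 // oppr_gt0 H2.
have -> : (k.+1 - i = 0)%N by apply/eqP; rewrite subn_eq0.
have e2 : (k - i = 0)%N by apply/eqP; rewrite subn_eq0 ltnW.
rewrite e2 expr0 mul1r in IH'; rewrite expr0 mul1r mulr_gt0 // ?H1 //.
Qed.

Lemma uniq_incr k (s : nat -> R) :
  (forall i, (i.+1 < k)%N -> s i < s i.+1) ->
  uniq [seq s i | i <- iota 0 k].
Proof.
move=> hs.
rewrite map_inj_in_uniq ?iota_uniq // => i j; rewrite !mem_iota !add0n /=.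
move=> hi hj hij; apply/eqP; apply: contraLR isT => hne.
have [lij|lij|lij] := ltngtP i j.
- by move: (incr_lt hs lij hj); rewrite hij ltxx.
- by move: (incr_lt hs lij hi); rewrite hij ltxx.
- by rewrite lij eqxx in hne.
Qed.

Lemma factor_roots (p : {poly R}) k (s : nat -> R) :
  p \is monic -> size p = k.+1 ->
  (forall i, (i.+1 < k)%N -> s i < s i.+1) ->
  (forall i, (i < k)%N -> root p (s i)) ->
  p = \prod_(0 <= i < k) ('X - (s i)%:P).
Proof.
move=> mp sp hs hr.
have hu := uniq_incr hs.
have := @all_roots_prod_XsubC _ p [seq s i | i <- iota 0 k].
rewrite size_map size_iota uniq_rootsE hu => /(_ sp) ->.
- by rewrite (monicP mp) scale1r big_map /index_iota subn0.
- apply/allP => z /mapP [i]; rewrite mem_iota add0n => /andP[_ hi] ->; exact: hr.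
- by [].
Qed.

Lemma sqr_sign (e : nat) : (-1) ^+ e * (-1) ^+ e = 1 :> R.
Proof. by rewrite -exprD addnn -mul2n exprM sqrrN expr1n expr1n. Qed.

Lemma interlace K : (forall k, (0 < k <= K)%N -> 0 < c k) ->
  forall k, (0 < k)%N -> (k <= K.+1)%N ->
  exists s : nat -> R,
    [/\ (forall i, (i.+1 < k)%N -> s i < s i.+1),
        (forall i, (i < k)%N -> root (P k) (s i)) &
        (forall i, (i < k)%N -> 0 < (-1) ^+ (k.-1 - i) * (P k.-1).[s i])].
Proof.
move=> cpos; elim=> [//|k IH] _ hk.
case: k IH hk => [|k] IH hk.
  exists (fun _ => 0); split=> [i //|i _|i _] /=.
    by rewrite P1 rootX.
  by rewrite P0 hornerC sub0n expr0 mulr1 ltr01.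
have [s [hs1 hs2 hs3]] := IH isT (ltnW hk).
rewrite /= in hs3.
set p := P k.+2.
have ck : 0 < c k.+1 by apply: cpos; rewrite /= -ltnS.
have hval i : (i < k.+1)%N -> p.[s i] = - c k.+1 * (P k).[s i].
  move=> hi; rewrite /p PS !hornerE (rootP (hs2 i hi)); ring.
have hsg i : (i < k.+1)%N -> 0 < (-1) ^+ (k.+1 - i) * p.[s i].
  move=> hi; rewrite hval // subSn // exprS.
  have -> : -1 * (-1) ^+ (k - i) * (- c k.+1 * (P k).[s i]) =
     c k.+1 * ((-1) ^+ (k - i) * (P k).[s i]) by ring.
  by rewrite mulr_gt0 // hs3.
have hfac : P k.+1 = \prod_(0 <= j < k.+1) ('X - (s j)%:P).
  by apply: factor_roots => //; [exact: P_monic | exact: P_size].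
have [sig hsig] : exists sig : nat -> R, forall i, (i < k)%N ->
    [/\ s i < sig i, sig i < s i.+1 & root p (sig i)].
  apply: (@choice_nat (fun i x => [/\ s i < x, x < s i.+1 & root p x])) => i hi.
  have hneg : p.[s i] * p.[s i.+1] < 0.
    have a1 := hsg i (ltnW hi).
    have a2 := hsg i.+1 hi.
    rewrite subSS in a2; rewrite subSn 1?ltnW // exprS in a1.
    have := mulr_gt0 a1 a2.
    have -> : -1 * (-1) ^+ (k - i) * p.[s i] * ((-1) ^+ (k - i) * p.[s i.+1])
       = - ((-1) ^+ (k - i) * (-1) ^+ (k - i)) * (p.[s i] * p.[s i.+1]) by ring.
    by rewrite sqr_sign mulN1r oppr_gt0.
  have [x [h1 h2 h3]] := @ivt2 p (s i) (s i.+1) (ltW (hs1 i hi)) hneg.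
  by exists x.
have [M hM] : exists M, forall x, M <= x -> 1 <= p.[x].
  have lc : lead_coef p = 1 by apply/monicP/P_monic.
  have lc0 : 0 < lead_coef p by rewrite lc ltr01.
  have [M hM] := polyrcf.poly_pinfty_gt_lc lc0.
  by exists M => x /hM; rewrite lc.
set U := Num.max M (Num.max (s k) (- s 0%N)).
have hU : 1 <= p.[U] by apply: hM; rewrite le_max lexx.
have hUk : s k <= U by rewrite le_max le_max lexx orbT.
have hU0 : - s 0%N <= U by rewrite le_max le_max lexx !orbT.
have [xt [ht1 ht2 ht3]] : exists x, [/\ s k < x, x < U & root p x].
  apply: ivt2 => //.
  have := hsg k (ltnSn k); rewrite subSn // subnn expr1 mulN1r oppr_gt0 => h.
  rewrite mulrC pmulr_rlt0 //; exact: lt_le_trans ltr01 hU.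
have [xb [hb1 hb2 hb3]] : exists x, [/\ - U < x, x < s 0%N & root p x].
  apply: ivt2; first by rewrite lerNl.
  have := hsg 0%N isT; rewrite subn0 => h.
  have [hodd _] := P_odd k.+2 U.
  rewrite -/p in hodd; rewrite hodd.
  have hUp : 0 < p.[U] by exact: lt_le_trans ltr01 hU.
  have := mulr_gt0 h hUp.
  have -> : (-1) ^+ k.+1 * p.[s 0%N] * p.[U] =
    - ((-1) ^+ k.+2 * p.[U] * p.[s 0%N]) by rewrite !exprS; ring.
  by rewrite oppr_gt0.
pose s' i := if i == 0%N then xb else if i == k.+1 then xt else sig i.-1.
have lo i : (0 < i)%N -> (i <= k.+1)%N -> s i.-1 < s' i.
  rewrite /s'; case: i => [//|i] _ hi /=.
  case: eqP => [[->]|/eqP hne] //=.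
  have hik : (i < k)%N by rewrite ltn_neqAle hne.
  by case: (hsig i hik).
have up i : (i <= k)%N -> s' i < s i.
  rewrite /s'; case: i => [//|i] hi /=.
  have -> : (i.+1 == k.+1) = false by apply/negbTE; rewrite eqSS neq_ltn hi.
  by case: (hsig i hi).
exists s'; split.
- move=> i hi; apply: (lt_trans (up i _)) => //.
  exact: (lo i.+1).
- move=> i hi; rewrite /s'; case: eqP => // /eqP hi0; case: eqP => // /eqP hne.
  case: i hi hne hi0 => [//|i] hi hne _ /=.
  have hik : (i < k)%N by lia.
  by case: (hsig i hik).
- move=> i hi /=; rewrite hfac horner_prod.
  apply: sign_prod => j hj hji.
    rewrite hornerXsubC subr_gt0; apply: le_lt_trans (lo i _ _); last 2 first.
    - by lia.
    - by lia.
    by apply: (incr_le hs1); lia.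
  rewrite hornerXsubC subr_lt0; apply: lt_le_trans (up i _) _; first by lia.
  by apply: (incr_le hs1); lia.
Qed.

End Gen.

Lemma sum_pick (R : realType) S k (H : nat -> R) :
  \sum_(i < S) (if (i : nat) == k then H i else 0) = if (k < S)%N then H k else 0.
Proof.
elim: S => [|S IH]; first by rewrite big_ord0.
rewrite big_ord_recr /= IH.
case: eqP => [e|ne].
  by rewrite e ltnn ltnSn add0r.
rewrite addr0 ltnS [(k <= S)%N]leq_eqVlt; case: eqP => // e.
by rewrite e in ne.
Qed.

Lemma sum_tri (R : realType) S (j : nat) (w F G : nat -> R) :
  \sum_(i < S) w i * (if j == (i : nat).+1 then F i else if (i : nat) == j.+1 then G i else 0) =
  (if ((0 < j) && (j.-1 < S))%N then w j.-1 * F j.-1 else 0) +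
  (if (j.+1 < S)%N then w j.+1 * G j.+1 else 0).
Proof.
have -> : \sum_(i < S) w i * (if j == (i : nat).+1 then F i else if (i : nat) == j.+1 then G i else 0) =
  \sum_(i < S) ((if (i : nat) == j.-1 then (if (0 < j)%N then w i * F i else 0) else 0) +
                (if (i : nat) == j.+1 then w i * G i else 0)).
  apply: eq_bigr => i _; move: (w i) (F i) (G i) (nat_of_ord i) => wi Fi Gi {}i.
  case: j => [|j] /=.
    by rewrite if_same add0r; case: eqP; rewrite ?mulr0.
  rewrite eqSS; case: (i =P j) => [->|hne].
    rewrite eqxx /=; have -> : (j == j.+2) = false by lia.
    by rewrite addr0.
  have -> : (j == i) = false by apply/eqP => e; apply: hne.
  by rewrite add0r; case: eqP; rewrite ?mulr0.
rewrite big_split /= (sum_pick _ _ (fun i => if (0 < j)%N then w i * F i else 0)) (sum_pick _ _ (fun i => w i * G i)).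
case: j => [|j] //=.
by rewrite if_same.
Qed.
Section Kraw.
Variable R : realType.
Variable m : nat.
Variable x : R.

Definition B (y : R) (l : nat) : R := (l`!%:R)^-1 * \prod_(j < l) (y - j%:R).

Lemma hpb (p : {poly R}) l z : (pbinom p l).[z] = B p.[z] l.
Proof.
rewrite /pbinom /B hornerZ horner_prod; congr (_ * _).
by apply: eq_bigr => j _; rewrite hornerD hornerN hornerC.
Qed.

Lemma B0 y : B y 0 = 1.
Proof. by rewrite /B big_ord0 fact0 invr1 mulr1. Qed.

Lemma BS y l : l.+1%:R * B y l.+1 = (y - l%:R) * B y l.
Proof.
rewrite /B big_ord_recr /= factS natrM.
have h1 : (l.+1%:R : R) != 0 by rewrite pnatr_eq0.
have h2 : (l`!%:R : R) != 0 by rewrite pnatr_eq0 -lt0n fact_gt0.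
rewrite invfM; field.
by rewrite h2 /=; rewrite -natr1 addrC in h1.
Qed.

Definition y := m%:R - x.
Definition f l := (-1) ^+ l * B x l.
Definition g j := B y j.
Definition Kv k := \sum_(l < k.+1) f l * g (k - l).
Definition Sv k := \sum_(l < k.+1) l%:R * f l * g (k - l).

Lemma hK k : (krawtchouk R m k).[x] = Kv k.
Proof.
rewrite /krawtchouk horner_sum; apply: eq_bigr => l _.
rewrite hornerZ hornerM !hpb hornerX hornerD hornerN hornerC hornerX /f /g /y.
by rewrite mulrA.
Qed.

Lemma fS l : l.+1%:R * f l.+1 = (l%:R - x) * f l.
Proof.
rewrite /f exprS.
transitivity (- (-1) ^+ l * (l.+1%:R * B x l.+1)); first ring.
rewrite BS; ring.
Qed.

Lemma T k : \sum_(l < k.+2) l%:R * f l * g (k.+1 - l) =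
            \sum_(l < k.+1) (l%:R - x) * f l * g (k - l).
Proof.
rewrite big_ord_recl /= mul0r mul0r add0r; apply: eq_bigr => l _.
by rewrite /bump /= add1n subSS fS.
Qed.

Lemma U k : \sum_(l < k.+2) (k.+1 - l)%:R * f l * g (k.+1 - l) =
            \sum_(l < k.+1) f l * (y - (k - l)%:R) * g (k - l).
Proof.
rewrite big_ord_recr /= subnn mul0r mul0r addr0; apply: eq_bigr => l _.
have hl : (l <= k)%N by rewrite -ltnS.
rewrite subSn // /g.
transitivity (f l * ((k - l).+1%:R * B y (k - l).+1)); first ring.
rewrite BS; ring.
Qed.

Lemma recA k : k.+1%:R * Kv k.+1 = (y - x - k%:R) * Kv k + 2 * Sv k.
Proof.
have -> : k.+1%:R * Kv k.+1 =
   \sum_(l < k.+2) l%:R * f l * g (k.+1 - l) +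
   \sum_(l < k.+2) (k.+1 - l)%:R * f l * g (k.+1 - l).
  rewrite /Kv mulr_sumr -big_split /=; apply: eq_bigr => l _.
  have hl : (l <= k.+1)%N by rewrite -ltnS.
  rewrite -mulrA -mulrA -mulrDl -natrD subnKC //.
rewrite T U /Kv /Sv !mulr_sumr -!big_split /=; apply: eq_bigr => l _.
have hl : (l <= k)%N by rewrite -ltnS.
rewrite natrB //; ring.
Qed.

Lemma recB k : Sv k.+1 = Sv k - x * Kv k.
Proof.
rewrite /Sv T /Kv mulr_sumr -sumrB; apply: eq_bigr => l _; ring.
Qed.

Lemma K0 : Kv 0 = 1.
Proof. by rewrite /Kv big_ord1 /f /g !B0 expr0 !mulr1. Qed.

Lemma K1 : Kv 1 = m%:R - 2 * x.
Proof.
rewrite /Kv big_ord_recr big_ord1 /= /f /g.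
have B1 z : B z 1 = z by rewrite /B big_ord1 /= factS fact0 muln1 invr1 mul1r subr0.
rewrite !B0 !B1 /y; ring.
Qed.

Lemma recK k : k.+2%:R * Kv k.+2 =
   (m%:R - 2 * x) * Kv k.+1 - (m%:R - k%:R) * Kv k.
Proof.
rewrite recA recB.
have hA := recA k.
have -> : Sv k = (k.+1%:R * Kv k.+1 - (y - x - k%:R) * Kv k) / 2.
  by rewrite hA; field.
rewrite /y.
by rewrite -addn1 natrD; field.
Qed.

End Kraw.

Definition cc (R : realType) (m : nat) (j : nat) : R := j%:R * (m%:R - j%:R + 1).

Lemma natS (R : realType) n : (n.+1%:R : R) = n%:R + 1.
Proof. by rewrite -addn1 natrD. Qed.

Lemma PK (R : realType) m (x : R) k :
  (P (cc R m) k).[2 * x - m%:R] = k`!%:R * (-1) ^+ k * Kv m x k /\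
  (P (cc R m) k.+1).[2 * x - m%:R] = k.+1`!%:R * (-1) ^+ k.+1 * Kv m x k.+1.
Proof.
elim: k => [|k [h1 h2]].
  rewrite P0 P1 hornerC hornerX K0 K1 fact0 factS fact0 /=; split; ring.
split => //.
rewrite PS hornerD hornerN hornerM hornerX hornerM hornerC h1 h2.
transitivity (k.+1`!%:R * (-1) ^+ k * (k.+2%:R * Kv m x k.+2)); last first.
  rewrite [k.+2`!]factS natrM !exprS; ring.
rewrite recK /cc factS natrM !natS !exprS; ring.
Qed.

Fixpoint hh (R : realType) (n t m : nat) (j : nat) : R :=
  match j with
  | 0 => 1
  | j'.+1 => hh R n t m j' * (n%:R - t%:R - j'%:R) / (j'.+1%:R * (m%:R - j'%:R))
  end.

Lemma hhS (R : realType) n t m j : hh R n t m j.+1 =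
  hh R n t m j * (n%:R - t%:R - j%:R) / (j.+1%:R * (m%:R - j%:R)).
Proof. by []. Qed.

Lemma eigen_of_root (R : realType) n r t (a : R) : (t <= r)%N -> (r.*2 <= n)%N ->
  root (P (cc R (n - t.*2)) (r - t).+1) a -> eigenvalue (Ay R n r t) a.
Proof.
move=> htr hrn hroot.
set N := (r - t)%N in hroot *; set m := (n - t.*2)%N in hroot *.
set c := cc R m in hroot *.
have hmR : (m%:R : R) = n%:R - 2 * t%:R.
  by rewrite /m natrB; [rewrite -mul2n natrM | lia].
apply/eigenvalueP.
exists (\row_(j < N.+1) (hh R n t m j * (P c j).[a])); last first.
  apply/negP => /eqP /rowP /(_ ord0); rewrite !mxE /= P0 hornerC mulr1 => /eqP.
  by rewrite oner_eq0.
apply/rowP => j; rewrite !mxE.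
under eq_bigr => i _ do rewrite !mxE.
rewrite (sum_tri _ j (fun i => hh R n t m i * (P c i).[a])
   (fun i => kbeta R n (t + i).+1) (fun _ => kgamma R n t (t + j))) /=.
move: (ltn_ord j); move: (nat_of_ord j) => {}j hj.
case: j hj => [|j] hj /=.
  rewrite add0r; case: ifP => hN.
    rewrite P1 P0 hornerX hornerC /kgamma.
    have p1 : ((t + 0).+1%:R : R) <= n%:R by rewrite ler_nat; lia.
    have p2 : (t.*2.+1%:R : R) <= n%:R by rewrite ler_nat; lia.
    rewrite natS addn0 in p1; rewrite natS -mul2n natrM in p2.
    rewrite addn0 hmR; field.
    by apply/andP; split; apply/lt0r_neq0; lra.
  have hN0 : N = 0%N by lia.
  rewrite hN0 P1 in hroot; move/rootP: hroot; rewrite hornerX => ->.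
  by rewrite mul0r.
have hj' : (j < N.+1)%N by lia.
rewrite hj'.
have hP : (P c j.+2).[a] = a * (P c j.+1).[a] - cc R m j.+1 * (P c j).[a].
  by rewrite PS hornerD hornerN hornerM hornerX hornerM hornerC.
have q1 : ((t + j).+1%:R : R) <= n%:R by rewrite ler_nat; lia.
have q2 : ((j.+1 + t.*2)%:R : R) <= n%:R by rewrite ler_nat; lia.
rewrite !natS !natrD -mul2n natrM !natS in q1 q2.
rewrite /kbeta /kgamma /cc hmR.
have hj0 : (0 : R) <= j%:R := ler0n _ _.
case: ifP => hN.
  have q3 : ((t + j).+2%:R : R) <= n%:R by rewrite ler_nat; lia.
  have q4 : ((j.+2 + t.*2)%:R : R) <= n%:R by rewrite ler_nat; lia.
  rewrite !natS !natrD -mul2n natrM !natS in q3 q4.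
  rewrite hP /cc hmR !natS !natrD !natS.
  field.
  by repeat (apply/andP; split); apply/lt0r_neq0; lra.
have hN0 : j.+1 = N by lia.
rewrite -hN0 in hroot; move/rootP: hroot; rewrite hP => hr.
have ee : a * (P c j.+1).[a] = cc R m j.+1 * (P c j).[a] by apply/eqP; rewrite -subr_eq0 hr.
rewrite mulrCA ee.
rewrite /cc ?hmR ?natS ?natrD ?natS.
field.
by repeat (apply/andP; split); apply/lt0r_neq0; lra.
Qed.

Unset Implicit Arguments.

Theorem lemma2p5 (R : realType) (n r t : nat) :
  (t <= r)%N -> (r.*2 <= n)%N ->
  [/\ (exists s : seq R,
         [/\ uniq s, size s = (r - t).+1 &
             forall a, eigenvalue (Ay R n r t) a <-> a \in s]),
      (forall a, eigenvalue (Ay R n r t) a -> mup a (char_poly (Ay R n r t)) = 1%N)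
    & (forall a, eigenvalue (Ay R n r t) a <->
         exists x, root (krawtchouk R (n - t.*2) (r - t).+1) x /\
                   a = 2 * x - (n - t.*2)%:R)].
Proof.
move=> htr hrn.
have cpos : forall k, (0 < k <= r - t)%N -> 0 < cc R (n - t.*2) k.
  move=> k /andP[hk1 hk2]; rewrite /cc mulr_gt0 ?ltr0n //.
  have : (k%:R : R) <= (n - t.*2)%:R by rewrite ler_nat; lia.
  lra.
have [s [hs1 hs2 _]] := @interlace R (cc R (n - t.*2)) (r - t) cpos (r - t).+1 isT (leqnn _).
set N := (r - t)%N in s hs1 hs2 cpos *.
set m := (n - t.*2)%N in s hs1 hs2 cpos *.
set c := cc R m in s hs1 hs2 cpos *.
have hfacP : P c N.+1 = \prod_(0 <= i < N.+1) ('X - (s i)%:P).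
  by apply: factor_roots => //; [exact: P_monic | exact: P_size].
have hch : char_poly (Ay R n r t) = P c N.+1.
  rewrite hfacP; apply: factor_roots => //.
  - exact: char_poly_monic.
  - by rewrite size_char_poly.
  move=> i hi; rewrite -eigenvalue_root_char; apply: eigen_of_root => //.
  exact: hs2.
set sq := [seq s i | i <- iota 0 N.+1].
have hsq : P c N.+1 = \prod_(z <- sq) ('X - z%:P).
  by rewrite hfacP big_map /index_iota subn0.
have hu : uniq sq := uniq_incr hs1.
have hev a : eigenvalue (Ay R n r t) a <-> a \in sq.
  by rewrite eigenvalue_root_char hch hsq root_prod_XsubC.
split.
- exists sq; split => //; by rewrite size_map size_iota.
- move=> a /hev ha; rewrite hch hsq mu_prod_XsubC count_uniq_mem //.
  by rewrite ha.
move=> a; rewrite hev -root_prod_XsubC -hsq.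
have hnz : ((N.+1)`!%:R * (-1) ^+ N.+1 : R) != 0.
  by rewrite mulf_neq0 ?signr_eq0 // pnatr_eq0 -lt0n fact_gt0.
split.
- move=> hr; exists ((a + m%:R) / 2).
  have ha : a = 2 * ((a + m%:R) / 2) - m%:R by field.
  split => //.
  move: hr; rewrite /root hK {1}ha; have [h _] := PK m ((a + m%:R) / 2) N.+1.
  by rewrite h mulf_eq0 (negbTE hnz).
move=> [x [hx ->]].
have [h _] := PK m x N.+1.
by rewrite /root h; move: hx; rewrite /root hK => /eqP->; rewrite mulr0.
Qed.
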